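(* Let $G$ be a finite group and $K$ an idempotent semifield. Let $V$ be an indecomposable representation of $G$ over $K$ and $W$ any representation of $G$ over $K$. Let $H\subseteq G$ be the stabilizer of some basis line of $V$ (a subgroup corresponding to $V$). Then there is a one-to-one correspondence between homomorphisms of representations $V\to W$ and $H$-invariant elements of $W$ (elements $w$ with $hw=w$ for all $h\in H$).
   Context: All semirings are commutative. A semifield is a semiring whose nonzero elements form a multiplicative group; idempotent means $a+a=a$ for all $a$. A representation of $G$ over $K$ is a $K$-linear action of $G$ on a free module $K^n$; a homomorphism of representations is a $K$-linear $G$-equivariant map; $V$ is indecomposable if it is not a direct sum of two nontrivial $G$-stable submodules. A basis line is a submodule spanned by a single vector of some basis; $G$ acts on basis lines by $g\cdot\mathrm{span}(v)=\mathrm{span}(gv)$. *)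

(* Defs.v *)
From HB Require Import structures.
From mathcomp Require Import all_boot all_algebra all_fingroup.
Set Implicit Arguments. Unset Strict Implicit. Unset Printing Implicit Defensive.
Import GRing.Theory.
Local Open Scope ring_scope.

(* Conventions (MathComp style): vectors of K^n are row vectors 'rV[K]_n,
   a representation of G on K^n is a map rho : gT -> 'M[K]_n that is a
   group homomorphism on G, and g acts on v by  v *m rho g  (right action,
   as in mathcomp's mxrepresentation).  K-linear maps K^n -> K^m are
   matrices 'M[K]_(n,m) acting by v |-> v *m A. *)

(* K is an idempotent semifield: nonzero elements are invertible
   (commutativity, 0 <> 1 are part of comNzSemiRingType) and a + a = a. *)
Definition idempotent_semifield (K : comNzSemiRingType) : Prop :=
  (forall a : K, a != 0 -> exists b : K, a * b = 1) /\
  (forall a : K, a + a = a).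

Definition is_rep (K : comNzSemiRingType) (gT : finGroupType) (G : {group gT})
    (n : nat) (rho : gT -> 'M[K]_n) : Prop :=
  rho 1%g = 1%:M /\
  (forall x y, x \in G -> y \in G -> rho (x * y)%g = rho x *m rho y).

Definition submodule (K : comNzSemiRingType) (n : nat) (U : 'rV[K]_n -> Prop) : Prop :=
  U 0 /\ (forall u v, U u -> U v -> U (u + v)) /\
  (forall (a : K) u, U u -> U (a *: u)).

Definition G_stable (K : comNzSemiRingType) (gT : finGroupType) (G : {group gT})
    (n : nat) (rho : gT -> 'M[K]_n) (U : 'rV[K]_n -> Prop) : Prop :=
  forall g u, g \in G -> U u -> U (u *m rho g).

Definition nontrivial_sub (K : comNzSemiRingType) (n : nat) (U : 'rV[K]_n -> Prop) : Prop :=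
  exists u, U u /\ u != 0.

Definition direct_sum (K : comNzSemiRingType) (n : nat) (U1 U2 : 'rV[K]_n -> Prop) : Prop :=
  forall v : 'rV[K]_n, exists! p : 'rV[K]_n * 'rV[K]_n,
    U1 p.1 /\ U2 p.2 /\ v = p.1 + p.2.

Definition indecomposable (K : comNzSemiRingType) (gT : finGroupType) (G : {group gT})
    (n : nat) (rho : gT -> 'M[K]_n) : Prop :=
  ~ exists U1 U2 : 'rV[K]_n -> Prop,
      submodule U1 /\ submodule U2 /\ G_stable G rho U1 /\ G_stable G rho U2 /\
      nontrivial_sub U1 /\ nontrivial_sub U2 /\ direct_sum U1 U2.

Definition is_basis (K : comNzSemiRingType) (n k : nat) (b : 'I_k -> 'rV[K]_n) : Prop :=
  forall v : 'rV[K]_n, exists! c : {ffun 'I_k -> K}, v = \sum_(j < k) c j *: b j.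

Definition line (K : comNzSemiRingType) (n : nat) (u : 'rV[K]_n) : 'rV[K]_n -> Prop :=
  fun x => exists a : K, x = a *: u.

Definition stabilizes_line (K : comNzSemiRingType) (gT : finGroupType) (n : nat)
    (rho : gT -> 'M[K]_n) (g : gT) (u : 'rV[K]_n) : Prop :=
  forall x, line (u *m rho g) x <-> line u x.

Definition rep_hom (K : comNzSemiRingType) (gT : finGroupType) (G : {group gT})
    (n m : nat) (rhoV : gT -> 'M[K]_n) (rhoW : gT -> 'M[K]_m) (A : 'M[K]_(n, m)) : Prop :=
  forall g, g \in G -> rhoV g *m A = A *m rhoW g.

Definition invariant_in (K : comNzSemiRingType) (gT : finGroupType) (H : {set gT})
    (m : nat) (rhoW : gT -> 'M[K]_m) (w : 'rV[K]_m) : Prop :=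
  forall h, h \in H -> w *m rhoW h = w.

(* Main.v *)
Require Import Defs.
From HB Require Import structures.
From mathcomp Require Import all_boot all_algebra all_fingroup.
From Stdlib Require Import ClassicalEpsilon.
Set Implicit Arguments. Unset Strict Implicit. Unset Printing Implicit Defensive.
Import GRing.Theory.
Local Open Scope ring_scope.

Section Scal.
Variable K : comNzSemiRingType.
Hypothesis hK : idempotent_semifield K.

Lemma addr_eq0_l (a b : K) : a + b = 0 -> a = 0.
Proof.
move=> h; have ha : a + a = a by case: hK.
transitivity (a + (a + b)); first by rewrite h addr0.
by rewrite addrA ha.
Qed.

Lemma sum_eq0_each (I : finType) (F : I -> K) : \sum_i F i = 0 -> forall i, F i = 0.
Proof. by move=> h i; move: h; rewrite (bigD1 i) //= => /addr_eq0_l. Qed.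

Lemma inv_ex (a : K) : a != 0 -> exists b, a * b = 1.
Proof. by case: hK => h _; apply: h. Qed.

Lemma mul_eq0_or (a b : K) : a * b = 0 -> a = 0 \/ b = 0.
Proof.
move=> h; case: (eqVneq a 0) => [->|ha]; first by left.
right; have [c hc] := inv_ex ha.
by rewrite -[b]mul1r -hc mulrC mulrA (mulrC b) h mul0r.
Qed.

Lemma mul_neq0 (a b : K) : a != 0 -> b != 0 -> a * b != 0.
Proof. by move=> ha hb; apply/eqP => /mul_eq0_or [] /eqP; rewrite ?(negPf ha) ?(negPf hb). Qed.

Lemma torsion (a : K) (N : nat) : a ^+ N.+1 = 1 -> a = 1.
Proof.
move=> hN.
pose s := \sum_(t < N.+1) a ^+ t.
have hs : a * s = s.
  rewrite /s mulr_sumr big_ord_recr /= -exprS hN big_ord_recl /= expr0 addrC.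
  by congr (_ + _); apply: eq_bigr => t _; rewrite -exprS.
have s0 : s != 0.
  apply/eqP; rewrite /s big_ord_recl /= expr0 => /addr_eq0_l /eqP.
  by rewrite oner_eq0.
have [c hc] := inv_ex s0.
by rewrite -[a]mulr1 -hc mulrA hs.
Qed.


Variables (n k : nat) (b : 'I_k -> 'rV[K]_n).
Hypothesis hb : is_basis b.

Lemma coord_ex (v : 'rV[K]_n) : exists c : {ffun 'I_k -> K}, v == \sum_j c j *: b j.
Proof. by have [c [/eqP hc _]] := hb v; exists c. Qed.

Definition coord v : {ffun 'I_k -> K} := xchoose (coord_ex v).

Lemma coordE v : v = \sum_j coord v j *: b j.
Proof. exact/eqP/(xchooseP (coord_ex v)). Qed.

Lemma coord_uniq v (c : {ffun 'I_k -> K}) : v = \sum_j c j *: b j -> coord v = c.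
Proof.
move=> hc; have [c0 [_ u]] := hb v.
by rewrite -(u _ hc) -(u _ (coordE v)).
Qed.

Lemma coord_lin (I : finType) (a : I -> K) (x : I -> 'rV[K]_n) j :
  coord (\sum_l a l *: x l) j = \sum_l a l * coord (x l) j.
Proof.
have -> : coord (\sum_l a l *: x l) = [ffun j => \sum_l a l * coord (x l) j].
  apply: coord_uniq; symmetry.
  under eq_bigr => t _ do rewrite ffunE scaler_suml.
  idtac.
  rewrite exchange_big /=; apply: eq_bigr => l _.
  idtac.
  rewrite [in RHS](coordE (x l)) scaler_sumr; apply: eq_bigr => t _.
  by rewrite scalerA.
by rewrite ffunE.
Qed.

Lemma coord_b j t : coord (b j) t = (j == t)%:R.
Proof.
have -> : coord (b j) = [ffun t => (j == t)%:R].
  apply: coord_uniq; rewrite (bigD1 j) //= ffunE eqxx scale1r big1 ?addr0 //.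
  by move=> l /negPf hl; rewrite ffunE eq_sym hl scale0r.
by rewrite ffunE.
Qed.

Lemma coord_scale a v t : coord (a *: v) t = a * coord v t.
Proof.
have -> : a *: v = \sum_(l < 1) a *: v by rewrite big_ord1.
by rewrite coord_lin big_ord1.
Qed.

Lemma coord_add u v t : coord (u + v) t = coord u t + coord v t.
Proof.
have -> : u + v = \sum_(l < 2) 1 *: (if l == ord0 then u else v).
  by rewrite big_ord_recr big_ord1 /= !scale1r.
by rewrite coord_lin big_ord_recr big_ord1 /= !mul1r.
Qed.

Lemma coord0 t : coord 0 t = 0.
Proof. by rewrite -(scale0r (0 : 'rV[K]_n)) coord_scale mul0r. Qed.

Lemma b_neq0 j : b j != 0.
Proof.
apply/eqP => h; have := coord_b j j; rewrite h coord0 eqxx => /eqP.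
by rewrite eq_sym oner_eq0.
Qed.

Lemma scal_eq a a' j : a *: b j = a' *: b j -> a = a'.
Proof.
by move=> h; have := coord_scale a (b j) j; rewrite h coord_scale coord_b eqxx !mulr1.
Qed.

Lemma scal_neq0 a j v : v = a *: b j -> v != 0 -> a != 0.
Proof. by move=> -> ; apply: contraNneq => ->; rewrite scale0r. Qed.


Variables (gT : finGroupType) (G : {group gT}) (rho : gT -> 'M[K]_n).
Hypothesis hrho : is_rep G rho.

Lemma rho1 : rho 1%g = 1%:M. Proof. by case: hrho. Qed.
Lemma rhoM x y : x \in G -> y \in G -> rho (x * y)%g = rho x *m rho y.
Proof. by case: hrho => _; apply. Qed.

Lemma rhoK g (v : 'rV[K]_n) : g \in G -> v *m rho g *m rho g^-1 = v.
Proof. by move=> hg; rewrite -mulmxA -rhoM ?groupV // mulgV rho1 mulmx1. Qed.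

Lemma mono g j : g \in G -> exists l d, d != 0 /\ b j *m rho g = d *: b l.
Proof.
move=> hg.
pose P (j l : 'I_k) := coord (b j *m rho g) l.
pose Q (j l : 'I_k) := coord (b j *m rho g^-1) l.
have PQ : forall g1 g2, g1 \in G -> g2 \in G -> (g1 * g2 = 1)%g -> forall j t,
   \sum_l coord (b j *m rho g1) l * coord (b l *m rho g2) t = (j == t)%:R.
  move=> g1 g2 h1 h2 e j0 t.
  rewrite -coord_b -coord_lin; congr (coord _ t); symmetry.
  transitivity (b j0 *m rho g1 *m rho g2); first by rewrite -mulmxA -rhoM // e rho1 mulmx1.
  rewrite [in LHS](coordE (b j0 *m rho g1)) mulmx_suml.
  by apply: eq_bigr => l _; rewrite -scalemxAl.
have hPQ := PQ g (g^-1)%g hg (groupVr hg) (mulgV g).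
have hQP := PQ (g^-1)%g g (groupVr hg) hg (mulVg g).
case: (pickP (fun l => P j l * Q l j != 0)) => [l Hl | H0]; last first.
  have := hPQ j j; rewrite eqxx big1 => [/eqP|l _]; first by rewrite eq_sym oner_eq0.
  by have := H0 l; rewrite /P /Q /= => /negbFE/eqP.
have Pl : P j l != 0 by apply: contraNneq Hl => ->; rewrite mul0r.
have Ql : Q l j != 0 by apply: contraNneq Hl => ->; rewrite mulr0.
exists l, (P j l); split => //.
rewrite [LHS]coordE (bigD1 l) //= big1 ?addr0 // => l' hl'.
have := hQP l l'; rewrite eq_sym (negPf hl') => /sum_eq0_each /(_ j) /mul_eq0_or.
case=> [/eqP|->]; last by rewrite scale0r.
by rewrite (negPf Ql).
Qed.

Lemma rhoX h t : h \in G -> rho (h ^+ t.+1)%g = rho (h ^+ t)%g *m rho h.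
Proof. by move=> hh; rewrite expgSr rhoM // groupX. Qed.

Lemma scal_one i h a : h \in G -> b i *m rho h = a *: b i -> a = 1.
Proof.
move=> hh e.
have ht : forall t, b i *m rho (h ^+ t)%g = a ^+ t *: b i.
  elim=> [|t IH]; first by rewrite expg0 rho1 mulmx1 expr0 scale1r.
  by rewrite rhoX // mulmxA IH -scalemxAl e scalerA exprSr.
have := ht #[h]%g; rewrite expg_order rho1 mulmx1 -{1}(scale1r (b i)).
move/scal_eq; rewrite -(prednK (order_gt0 h)) => /esym.
exact: torsion.
Qed.


Definition Orb (i l : 'I_k) : Prop := exists g, g \in G /\ exists c, b l = c *: (b i *m rho g).

Definition ob i l : bool := if excluded_middle_informative (Orb i l) then true else false.

Lemma obP i l : reflect (Orb i l) (ob i l).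
Proof. by rewrite /ob; case: excluded_middle_informative => h; constructor. Qed.

Lemma Orb_step i j g l d : Orb i j -> g \in G -> b j *m rho g = d *: b l -> d != 0 -> Orb i l.
Proof.
move=> [g' [hg' [c hc]]] hg e d0.
have [d' hd'] := inv_ex d0.
exists (g' * g)%g; split; first exact: groupM.
exists (d' * c); rewrite rhoM // mulmxA -scalerA scalemxAl -hc e scalerA.
by rewrite mulrC hd' scale1r.
Qed.

Lemma trans i : indecomposable G rho -> forall l, Orb i l.
Proof.
move=> hind l; apply/obP; apply/negPn/negP => hl; apply: hind.
pose U1 v := forall l, ~~ ob i l -> coord v l = 0.
pose U2 v := forall l, ob i l -> coord v l = 0.
have sub : forall U : 'rV[K]_n -> Prop, (forall v, U v <-> forall l, ob i l = false -> coord v l = 0)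
   \/ (forall v, U v <-> forall l, ob i l = true -> coord v l = 0) -> submodule U.
  move=> U hU; split; [|split].
  - by case: hU => hU; apply/hU => t _; rewrite coord0.
  - move=> u v; case: hU => hU /hU hu /hU hv; apply/hU => t ht;
    by rewrite coord_add hu ?hv ?addr0.
  - move=> a u; case: hU => hU /hU hu; apply/hU => t ht;
    by rewrite coord_scale hu ?mulr0.
exists U1, U2; split; [|split; [|split; [|split; [|split; [|split]]]]].
- apply: (sub U1); left => v; split => h t ht; by apply: h; move: ht; case: (ob i t).
- apply: (sub U2); right => v; split => h t ht; exact: h.
- move=> g u hg hu t ht.
  rewrite (coordE u) mulmx_suml.
  under eq_bigr => j _ do rewrite -scalemxAl.
  rewrite coord_lin big1 // => j _.
  case hj: (ob i j); last by rewrite hu ?hj // mul0r.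
  have [l' [d [d0 e]]] := mono j hg.
  rewrite e coord_scale coord_b.
  case: (eqVneq l' t) => [elt|]; last by rewrite /= mulr0n !mulr0.
  subst l'; case/negP: ht; apply/obP.
  exact: (Orb_step (elimT (obP i j) hj) hg e d0).
- move=> g u hg hu t ht.
  rewrite (coordE u) mulmx_suml.
  under eq_bigr => j _ do rewrite -scalemxAl.
  rewrite coord_lin big1 // => j _.
  case hj: (ob i j); first by rewrite hu ?hj // mul0r.
  have [l' [d [d0 e]]] := mono j hg.
  rewrite e coord_scale coord_b.
  case: (eqVneq l' t) => [elt|]; last by rewrite /= mulr0n !mulr0.
  subst l'; move/negbT: hj => /negP; case; apply/obP.
  have [d' hd'] := inv_ex d0.
  apply: (Orb_step (j:=t) (g:=(g^-1)%g) (d:=d')); first by apply/obP.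
  - by rewrite groupV.
  - by rewrite -[b t]scale1r -hd' mulrC -scalerA -e scalemxAl rhoK.
  - by apply/eqP => d'0; move: hd'; rewrite d'0 mulr0 => /eqP; rewrite eq_sym oner_eq0.
- exists (b i); split; last exact: b_neq0.
  move=> t ht; rewrite coord_b; case: (eqVneq i t) => [eit|]; last by [].
  subst t; case/negP: ht; apply/obP; exists 1%g; split; first exact: group1.
  by exists 1; rewrite rho1 mulmx1 scale1r.
- exists (b l); split; last exact: b_neq0.
  move=> t ht; rewrite coord_b; case: (eqVneq l t) => [elt|]; last by [].
  by subst t; rewrite ht in hl.
- move=> v.
  pose c1 := [ffun t => if ob i t then coord v t else 0].
  pose c2 := [ffun t => if ob i t then 0 else coord v t].
  exists (\sum_t c1 t *: b t, \sum_t c2 t *: b t); split.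
    split; [|split].
    + move=> t ht; rewrite coord_lin.
      under eq_bigr => j _ do rewrite coord_b.
      rewrite (bigD1 t) //= big1 ?eqxx ?ffunE ?(negPf ht) ?mulr1 ?addr0 //.
      by move=> j /negPf hj; rewrite hj mulr0.
    + move=> t ht; rewrite coord_lin.
      under eq_bigr => j _ do rewrite coord_b.
      rewrite (bigD1 t) //= big1 ?eqxx ?ffunE ?ht ?mulr1 ?addr0 //.
      by move=> j /negPf hj; rewrite hj mulr0.
    + rewrite /= -big_split /= [LHS]coordE; apply: eq_bigr => t _.
      by rewrite !ffunE; case: (ob i t); rewrite ?scale0r ?addr0 ?add0r.
  move=> [q1 q2] /= [h1 [h2 ev]].
  have hv : forall t, coord v t = coord q1 t + coord q2 t by move=> t; rewrite ev coord_add.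
  congr (_, _).
  + rewrite [RHS]coordE; apply: eq_bigr => t _; rewrite ffunE hv.
    case ht: (ob i t); first by rewrite (h2 t ht) addr0.
    by rewrite (h1 t (negbT ht)) scale0r.
  + rewrite [RHS]coordE; apply: eq_bigr => t _; rewrite ffunE hv.
    case ht: (ob i t); first by rewrite (h2 t ht) scale0r.
    by rewrite (h1 t (negbT ht)) add0r.
Qed.

End Scal.

Theorem lemma3p19 (gT : finGroupType) (G : {group gT}) (K : comNzSemiRingType)
    (n m k : nat) (rhoV : gT -> 'M[K]_n) (rhoW : gT -> 'M[K]_m)
    (b : 'I_k -> 'rV[K]_n) (i : 'I_k) (H : {set gT}) :
  idempotent_semifield K ->
  is_rep G rhoV -> is_rep G rhoW ->
  indecomposable G rhoV ->
  is_basis b ->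
  (forall g, g \in H <-> (g \in G /\ stabilizes_line rhoV g (b i))) ->
  [/\ (forall A : 'M[K]_(n, m), rep_hom G rhoV rhoW A -> invariant_in H rhoW (b i *m A)),
      (forall A1 A2 : 'M[K]_(n, m), rep_hom G rhoV rhoW A1 -> rep_hom G rhoV rhoW A2 ->
          b i *m A1 = b i *m A2 -> A1 = A2)
    & (forall w : 'rV[K]_m, invariant_in H rhoW w ->
          exists2 A : 'M[K]_(n, m), rep_hom G rhoV rhoW A & b i *m A = w)].
Proof.
move=> hK hrV hrW hind hb hH.
split.
- move=> A hA h /hH [hh hs].
  have : line (b i *m rhoV h) (b i *m rhoV h) by exists 1; rewrite scale1r.
  move/hs => [a ea].
  have a1 := scal_one hK hb hrV hh ea.
  by rewrite -mulmxA -hA // mulmxA ea a1 scale1r.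
- move=> A1 A2 h1 h2 e.
  have key : forall v : 'rV[K]_n, v *m A1 = v *m A2.
    move=> v; rewrite (coordE hb v) !mulmx_suml; apply: eq_bigr => j _.
    rewrite -!scalemxAl; congr (_ *: _).
    have [g [hg [c ->]]] := trans hK hb hrV i hind j.
    by rewrite -!scalemxAl -!mulmxA h1 // h2 // !mulmxA e.
  by apply/row_matrixP => r; rewrite !rowE; exact: key.
move=> w hw.
have ex : forall l, exists p : gT * K, (p.1 \in G) && (b l == p.2 *: (b i *m rhoV p.1)).
  move=> l; have [g [hg [c hc]]] := trans hK hb hrV i hind l.
  by exists (g, c); rewrite /= hg; apply/eqP.
pose sel l := xchoose (ex l).
have selP : forall l, (sel l).1 \in G /\ b l = (sel l).2 *: (b i *m rhoV (sel l).1).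
  by move=> l; have /andP[? /eqP ?] := xchooseP (ex l).
pose wl l := (sel l).2 *: (w *m rhoW (sel l).1).
pose F (v : 'rV[K]_n) := \sum_l coord hb v l *: wl l.
have Flin : forall (I : finType) (a : I -> K) (x : I -> 'rV[K]_n),
    F (\sum_l a l *: x l) = \sum_l a l *: F (x l).
  move=> I a x; rewrite /F.
  under eq_bigr => t _ do rewrite coord_lin scaler_suml.
  rewrite exchange_big; apply: eq_bigr => l _; rewrite scaler_sumr; apply: eq_bigr => t _.
  by rewrite scalerA.
have Fscale : forall a x, F (a *: x) = a *: F x.
  by move=> a x; have := Flin _ (fun _ : 'I_1 => a) (fun _ => x); rewrite !big_ord1.
have Fb : forall j, F (b j) = wl j.
  move=> j; rewrite /F (bigD1 j) //= coord_b eqxx scale1r big1 ?addr0 // => t /negPf hjt.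
  by rewrite coord_b eq_sym hjt scale0r.
have wd : forall l h c, h \in G -> b l = c *: (b i *m rhoV h) -> wl l = c *: (w *m rhoW h).
  move=> l h c hh hc; case: (selP l) => hg0 hc0.
  rewrite /wl; move: hg0 hc0; set g0 := (sel l).1; set c0 := (sel l).2 => hg0 hc0.
  have c0n : c0 != 0.
    by apply/eqP => c00; move: (b_neq0 hb l); rewrite hc0 c00 scale0r eqxx.
  have [c0' hc0'] := inv_ex hK c0n.
  have exi : b i *m rhoV (g0 * h^-1)%g = (c0' * c) *: b i.
    rewrite (rhoM hrV) ?groupV // mulmxA.
    have -> : b i *m rhoV g0 = (c0' * c) *: (b i *m rhoV h).
      by rewrite -scalerA -hc hc0 scalerA mulrC hc0' scale1r.
    by rewrite -scalemxAl (rhoK hrV).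
  have e1 := scal_one hK hb hrV (groupM hg0 (groupVr hh)) exi.
  have inH : (g0 * h^-1)%g \in H.
    apply/hH; split; first by rewrite groupM ?groupV.
    by move=> y; rewrite exi e1 scale1r.
  have hwx := hw _ inH.
  have cc : c0 = c by rewrite -[c0]mulr1 -e1 mulrA hc0' mul1r.
  rewrite cc; congr (_ *: _).
  by rewrite -[in RHS]hwx -mulmxA -(rhoM hrW) ?groupM ?groupV // -mulgA mulVg mulg1.
have keyF : forall h c, h \in G -> F (c *: (b i *m rhoV h)) = c *: (w *m rhoW h).
  move=> h c hh; have [l [d [d0 e]]] := mono hK hb hrV i hh.
  have [d' hd'] := inv_ex hK d0.
  rewrite e scalerA Fscale Fb (wd l h d') //; last by rewrite e scalerA mulrC hd' scale1r.
  by rewrite scalerA -mulrA hd' mulr1.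
pose A := \matrix_(r < n) F 'e_r.
have FA : forall v : 'rV[K]_n, v *m A = F v.
  move=> v; rewrite mulmx_sum_row.
  under eq_bigr => r _ do rewrite rowK.
  by rewrite -Flin -row_sum_delta.
exists A.
  move=> g hg; apply/row_matrixP => r; rewrite !rowE !mulmxA.
  suff gen : forall v : 'rV[K]_n, v *m rhoV g *m A = v *m A *m rhoW g by apply: gen.
  move=> v; rewrite (coordE hb v) !mulmx_suml; apply: eq_bigr => j _.
  rewrite -!scalemxAl; congr (_ *: _).
  rewrite !FA; have [hgj hcj] := selP j; rewrite hcj.
  rewrite keyF // -scalemxAl -mulmxA -(rhoM hrV) // keyF ?groupM //.
  by rewrite (rhoM hrW) // mulmxA scalemxAl.
rewrite FA; have := keyF 1%g 1 (group1 G).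
by rewrite (rho1 hrV) (rho1 hrW) !mulmx1 !scale1r.
Qed.
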